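(* Consider Model 2 (the risk-neutral insider model) with $N\ge1$ trading periods, as described in the context. A subgame perfect equilibrium exists. In this equilibrium there are real numbers $\beta_n,\lambda_n,\alpha_n,\delta_n,\Sigma_n$ such that for $n=1,\dots,N$: $x_n=\beta_n(v-p_{n-1})$, $p_n-p_{n-1}=\lambda_n y_n$, $\Sigma_n=\operatorname{Var}(v\mid y_1,\dots,y_n)$, and $$E\Big(\sum_{k=n}^N\pi_k\,\Big|\,p_1,\dots,p_{n-1},v\Big)=\alpha_{n-1}(v-p_{n-1})^2+\delta_{n-1},$$ where $$\delta_n=a_n\sigma_u\Delta t_N^{1/2}\Sigma_n^{1/2},\quad \alpha_n=b_n\sigma_u\Delta t_N^{1/2}\Sigma_n^{-1/2}\quad(n=0,\dots,N-1),\qquad \beta_n=c_n\sigma_u\Delta t_N^{1/2}\Sigma_{n-1}^{-1/2}\quad(n=1,\dots,N),$$ and the sequences $\{a_n\},\{b_n\},\{c_n\}$, with terminal values $a_{N-1}=0$, $b_{N-1}=\tfrac12$, $c_N=1$, satisfy for $n=1,\dots,N-1$ $$a_{n-1}=a_n\Big(\frac{1}{c_n^2+1}\Big)^{1/2}+b_n\Big(\frac{1}{c_n^2+1}\Big)^{3/2}c_n^2,\qquad b_{n-1}=b_n\Big(\frac{1}{c_n^2+1}\Big)^{3/2}+\frac{c_n}{c_n^2+1},\qquad a_n+b_n=\frac{1-c_n^2}{c_n(1+c_n^2)^{1/2}},$$ with $c_n>0$ for $n=1,\dots,N$.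
   Context: Model. Fix an integer $N\ge1$ and put $\Delta t_N=1/N$. A risky asset has liquidation value $v\sim N(p_0,\Sigma_0)$ with $\Sigma_0>0$. In each period $n=1,\dots,N$ noise traders submit $u_n\sim N(0,\sigma_u^2\Delta t_N)$ ($\sigma_u>0$), i.i.d. and independent of $v$. The insider knows $v$ and submits $x_n=\beta_n(v-p_{n-1})$ with $\beta_n\in\mathbb R$. The market maker observes $y_n=x_n+u_n$ and sets $p_n=E[v\mid y_1,\dots,y_n]$. The insider's profit in period $n$ is $\pi_n=x_n(v-p_n)$ and $\Sigma_n=\operatorname{Var}(v\mid y_1,\dots,y_n)$. For such strategies, with $\lambda_n=\beta_n\Sigma_{n-1}/(\beta_n^2\Sigma_{n-1}+\sigma_u^2\Delta t_N)$ one has $p_n-p_{n-1}=\lambda_ny_n$, $\Sigma_n=\Sigma_{n-1}\sigma_u^2\Delta t_N/(\beta_n^2\Sigma_{n-1}+\sigma_u^2\Delta t_N)$, and $E(\sum_{k=n}^N\pi_k\mid p_1,\dots,p_{n-1},v)=\alpha_{n-1}(v-p_{n-1})^2+\delta_{n-1}$ with $\alpha_N=\delta_N=0$, $\alpha_{n-1}=\alpha_n(1-\lambda_n\beta_n)^2+\beta_n(1-\lambda_n\beta_n)$, $\delta_{n-1}=\delta_n+\alpha_n\lambda_n^2\sigma_u^2\Delta t_N$. Equilibrium. An insider strategy specifies, for each period $n$ and each value $\Sigma_{n-1}>0$ of the current conditional variance, an intensity $\beta_n$. Given the strategy for periods $n+1,\dots,N$, each choice of $\beta_n$ determines (with later intensities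 given by the strategy applied to the resulting variances) $\alpha_{n-1},\delta_{n-1}$ as functions of $\beta_n$ and $\Sigma_{n-1}$. A subgame perfect equilibrium of Model 2 is a strategy such that for every $n$ and every $\Sigma_{n-1}>0$ the prescribed $\beta_n$ maximizes over $\beta_n\in\mathbb R$ the ex ante expected profit $E(\sum_{k=n}^N\pi_k)=\alpha_{n-1}\Sigma_{n-1}+\delta_{n-1}$, with the market maker pricing efficiently given this strategy. *)

(* Defs.v *)
From Stdlib Require Import Reals Lra Lia.
Open Scope R_scope.

(* Reduced (coefficient) form of Model 2, as given in the context.
   sd stands for sigma_u^2 * Delta t_N.
   A strategy  s : nat -> R -> R  gives, for period n and current conditional
   variance Sigma_{n-1} > 0, the intensity beta_n = s n Sigma_{n-1}. *)

Definition lam_of (sd b Sig : R) : R := b * Sig / (b ^ 2 * Sig + sd).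

Definition sig_next (sd b Sig : R) : R := Sig * sd / (b ^ 2 * Sig + sd).

(* Backward step: from (alpha_n, delta_n) to (alpha_{n-1}, delta_{n-1}). *)
Definition back_step (sd b Sig : R) (ad : R * R) : R * R :=
  let l := lam_of sd b Sig in
  (fst ad * (1 - l * b) ^ 2 + b * (1 - l * b), snd ad + fst ad * l ^ 2 * sd).

(* cont s sd n m Sig = (alpha_{n-1}, delta_{n-1}) when play starts at period n
   with Sigma_{n-1} = Sig, m periods (n, ..., n+m-1) remain, and s is used
   throughout.  With m = N - n + 1 this is the game up to period N. *)
Fixpoint cont (s : nat -> R -> R) (sd : R) (n m : nat) (Sig : R) : R * R :=
  match m with
  | O => (0, 0)
  | S m' =>
      let b := s n Sig in
      back_step sd b Sig (cont s sd (S n) m' (sig_next sd b Sig))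
  end.

(* (alpha_{n-1}, delta_{n-1}) as functions of the choice b = beta_n at period n
   (with Sigma_{n-1} = Sig), later periods n+1..N following s. *)
Definition dev_coef (N : nat) (s : nat -> R -> R) (sd : R) (n : nat) (b Sig : R)
  : R * R :=
  back_step sd b Sig (cont s sd (S n) (N - n) (sig_next sd b Sig)).

(* Ex ante expected profit from period n on: alpha_{n-1} Sigma_{n-1} + delta_{n-1}. *)
Definition exp_profit (N : nat) (s : nat -> R -> R) (sd : R) (n : nat) (b Sig : R) : R :=
  fst (dev_coef N s sd n b Sig) * Sig + snd (dev_coef N s sd n b Sig).

Definition SPE (N : nat) (sd : R) (s : nat -> R -> R) : Prop :=
  forall n : nat, (1 <= n <= N)%nat ->
  forall Sig : R, 0 < Sig ->
  forall b : R, exp_profit N s sd n b Sig <= exp_profit N s sd n (s n Sig) Sig.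

Fixpoint sig_path (s : nat -> R -> R) (sd Sig0 : R) (n : nat) : R :=
  match n with
  | O => Sig0
  | S k => sig_next sd (s (S k) (sig_path s sd Sig0 k)) (sig_path s sd Sig0 k)
  end.

Definition beta_path (s : nat -> R -> R) (sd Sig0 : R) (n : nat) : R :=
  s n (sig_path s sd Sig0 (n - 1)).

Definition lambda_path (s : nat -> R -> R) (sd Sig0 : R) (n : nat) : R :=
  lam_of sd (beta_path s sd Sig0 n) (sig_path s sd Sig0 (n - 1)).

Definition alpha_path (N : nat) (s : nat -> R -> R) (sd Sig0 : R) (n : nat) : R :=
  fst (cont s sd (S n) (N - n) (sig_path s sd Sig0 n)).
Definition delta_path (N : nat) (s : nat -> R -> R) (sd Sig0 : R) (n : nat) : R :=
  snd (cont s sd (S n) (N - n) (sig_path s sd Sig0 n)).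

(* Main.v *)
Require Import Defs.
From Stdlib Require Import Reals Lra Psatz.
Open Scope R_scope.

Definition wof (S : R) : R := (- S + sqrt (S^2 + 8)) / 4.
Definition tof (S : R) : R := sqrt (1 - (wof S)^2).

Lemma wt_facts S : 0 <= S ->
  0 < wof S /\ 0 < tof S /\ tof S ^2 + wof S ^2 = 1 /\ S * wof S = 1 - 2 * wof S ^2.
Proof.
intros HS.
assert (Hq0 := sqrt_pos (S^2+8)).
assert (Hq2 : sqrt (S^2+8) ^2 = S^2+8) by (apply pow2_sqrt; nra).
assert (Hw0 : 0 < wof S) by (unfold wof; nra).
assert (Hw1 : wof S < 1) by (unfold wof; nra).
assert (Ht2 : tof S ^2 = 1 - wof S ^2) by (unfold tof; apply pow2_sqrt; nra).
assert (Ht0 : 0 < tof S) by (unfold tof; apply sqrt_lt_R0; nra).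
repeat split; try lra.
unfold wof. nra.
Qed.

Lemma core S T W : 0 <= S -> 0 <= T -> T^2 + W^2 = 1 ->
  S*T + W*T <= S * tof S + wof S * tof S.
Proof.
intros HS HT HTW.
destruct (wt_facts S HS) as (Hw & Ht & Htw & HSw).
set (w := wof S) in *. set (t := tof S) in *.
assert (E: forall W', 0 <= W' -> T^2+W'^2 = 1 -> S*T + W'*T <= S*t + w*t).
{ intros W' HW' H1.
  assert (0 <= t^3 - (t^2-w^2)*T - w*W'*T).
  { assert (H5: 0 <= 1 - (t*T + w*W')).
    { assert (0 <= (t-T)^2 + (w-W')^2) by (apply Rplus_le_le_0_compat; apply pow2_ge_0). nra. }
    assert (H6: 0 <= t + w^2*T + t*w*W').
    { assert (0 <= w^2*T) by (apply Rmult_le_pos; [apply pow2_ge_0|lra]).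
      assert (0 <= t*w*W') by (apply Rmult_le_pos; [nra|lra]). lra. }
    assert (H7 := Rmult_le_pos _ _ H5 H6).
    replace (t^3 - (t^2-w^2)*T - w*W'*T) with ((1 - (t*T + w*W')) * (t + w^2*T + t*w*W')
      + (t + w*T*W')*(t^2+w^2-1) + t*w^2*(T^2+W'^2-1)) by ring.
    rewrite Htw, H1. lra. }
  assert (w * (S*t + w*t - S*T - W'*T) = t^3 - (t^2-w^2)*T - w*W'*T).
  { replace (w * (S*t + w*t - S*T - W'*T)) with ((S*w)*t + w^2*t - (S*w)*T - w*W'*T) by ring.
    rewrite HSw. replace 1 with (t^2+w^2) at 1 2 by exact Htw. ring. }
  nra. }
destruct (Rle_lt_dec 0 W).
- apply E; auto.
- assert (S*T + (-W)*T <= S*t + w*t) by (apply E; [lra| nra]). nra.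
Qed.
Lemma comp r X q Y A B b Sig sd : 0<r -> 0<X -> 0<Y -> Y^2 = 1+q^2 -> sd = r^2 -> Sig = X^2 -> b = q*r/X ->
 back_step sd b Sig (B*r/sqrt (sig_next sd b Sig), A*r*sqrt(sig_next sd b Sig))
 = (r/X*(B/Y^3 + q/Y^2), r*X*(A/Y + B*q^2/Y^3)).
Proof.
intros Hr HX HY HY2 Hsd HS Hb; subst sd Sig b.
assert (Hden: (q*r/X)^2*X^2 + r^2 = r^2*Y^2) by (rewrite HY2; field; repeat split; lra).
assert (Hs: sqrt (sig_next (r^2) (q*r/X) (X^2)) = X/Y).
{ unfold sig_next. rewrite Hden.
  replace (X^2*r^2/(r^2*Y^2)) with ((X/Y)^2) by (field; repeat split; lra).
  apply sqrt_pow2. apply Rlt_le, Rdiv_lt_0_compat; lra. }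
assert (H2: lam_of (r^2) (q*r/X) (X^2) = q*X/(r*Y^2)).
{ unfold lam_of. rewrite Hden. field; repeat split; lra. }
assert (H1: 1 - lam_of (r^2) (q*r/X) (X^2) * (q*r/X) = 1/Y^2).
{ rewrite H2. replace (1 - q*X/(r*Y^2)*(q*r/X)) with ((Y^2-q^2)/Y^2) by (field; repeat split; lra).
  rewrite HY2. field; nra. }
rewrite Hs. unfold back_step. cbv zeta. cbn [fst snd]. rewrite H1, H2.
f_equal; field; repeat split; lra.
Qed.

Definition cstep (p : R*R) : R*R :=
  let S := fst p + snd p in
  (fst p * tof S + snd p * tof S * wof S ^2, snd p * tof S ^3 + wof S * tof S).
Fixpoint coefs (m : nat) : R*R :=
  match m with O => (0,0) | S m' => cstep (coefs m') end.

Lemma coefs_nonneg m : 0 <= fst (coefs m) /\ 0 <= snd (coefs m).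
Proof.
induction m as [|m [HA HB]]; cbn [coefs fst snd]; [lra|].
unfold cstep. cbn [fst snd].
destruct (wt_facts (fst (coefs m) + snd (coefs m))) as (Hw & Ht & _ & _); [lra|].
split.
- apply Rplus_le_le_0_compat; [nra|].
  apply Rmult_le_pos; [nra| apply pow2_ge_0].
- apply Rplus_le_le_0_compat; [|nra].
  apply Rmult_le_pos; [lra| apply pow_le; lra].
Qed.

Lemma step_eq r X A B sd Sig : 0<r -> 0<X -> sd = r^2 -> Sig = X^2 -> 0 <= A -> 0 <= B ->
  let c := wof (A+B) / tof (A+B) in
  back_step sd (c*r/X) Sig (B*r/sqrt(sig_next sd (c*r/X) Sig), A*r*sqrt(sig_next sd (c*r/X) Sig))
  = ((B * tof (A+B) ^3 + wof (A+B) * tof (A+B))*r/X,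
     (A * tof (A+B) + B * tof (A+B) * wof (A+B) ^2)*r*X).
Proof.
intros Hr HX Hsd HS HA HB c.
destruct (wt_facts (A+B)) as (Hw & Ht & Htw & _); [lra|].
unfold c. set (w := wof (A+B)) in *. set (t := tof (A+B)) in *.
rewrite (comp r X (w/t) (1/t) A B (w/t*r/X) Sig sd); auto.
- f_equal; field; lra.
- apply Rdiv_lt_0_compat; lra.
- replace ((1/t)^2) with ((t^2+w^2)/t^2) by (rewrite Htw; field; lra).
  field; lra.
Qed.

Definition cof (N n : nat) : R :=
  wof (fst (coefs (N - n)) + snd (coefs (N - n))) / tof (fst (coefs (N - n)) + snd (coefs (N - n))).

Lemma sig_next_pos sd b Sig : 0 < sd -> 0 < Sig -> 0 < sig_next sd b Sig.
Proof.
intros. unfold sig_next. apply Rdiv_lt_0_compat; [nra|].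
assert (0 <= b^2*Sig) by (apply Rmult_le_pos; [apply pow2_ge_0|lra]). lra.
Qed.

Lemma cont_S s sd n k Sig : cont s sd n (S k) Sig =
  back_step sd (s n Sig) Sig (cont s sd (S n) k (sig_next sd (s n Sig) Sig)).
Proof. reflexivity. Qed.

Lemma cont_eq N r sd : 0 < r -> sd = r^2 ->
  forall k n, (n + k = N)%nat -> forall Sig, 0 < Sig ->
  cont (fun n Sig => cof N n * r / sqrt Sig) sd (S n) k Sig
  = (snd (coefs k) * r / sqrt Sig, fst (coefs k) * r * sqrt Sig).
Proof.
intros Hr Hsd k. induction k as [|k IH]; intros n Hn Sig HSig.
- cbn [cont coefs fst snd]. f_equal; field. apply Rgt_not_eq, sqrt_lt_R0; lra.
- rewrite cont_S.
  assert (Hsd0 : 0 < sd) by (subst; nra).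
  rewrite IH; [|lia| apply sig_next_pos; auto].
  assert (Hk : (N - S n = k)%nat) by lia.
  unfold cof. rewrite Hk.
  destruct (coefs_nonneg k) as [HA HB].
  assert (HX : 0 < sqrt Sig) by (apply sqrt_lt_R0; lra).
  rewrite (step_eq r (sqrt Sig) (fst (coefs k)) (snd (coefs k)) sd Sig); auto.
  symmetry; apply pow2_sqrt; lra.
Qed.

Lemma value r X q Y A B Sig : 0 < r -> 0 < X -> 0 < Y -> Y^2 = 1+q^2 -> Sig = X^2 ->
  r/X*(B/Y^3 + q/Y^2)*Sig + r*X*(A/Y + B*q^2/Y^3)
  = r*X*((A+B)*(1/Y) + (q/Y)*(1/Y)).
Proof.
intros Hr HX HY HY2 HS. subst Sig.
transitivity (r*X*((A+B)*(1/Y) + (q/Y)*(1/Y)) + r*X*B*(1+q^2 - Y^2)/Y^3).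
- field. lra.
- rewrite HY2. field. lra.
Qed.

Lemma spe_ineq N r sd n Sig b : 0 < r -> sd = r^2 -> (1 <= n <= N)%nat -> 0 < Sig ->
  exp_profit N (fun n Sig => cof N n * r / sqrt Sig) sd n b Sig
  <= exp_profit N (fun n Sig => cof N n * r / sqrt Sig) sd n
       ((fun n Sig => cof N n * r / sqrt Sig) n Sig) Sig.
Proof.
intros Hr Hsd Hn HSig. cbv beta.
assert (Hsd0 : 0 < sd) by (subst; nra).
unfold exp_profit, dev_coef.
rewrite (cont_eq N r sd Hr Hsd (N - n) n ltac:(lia) (sig_next sd b Sig)); [|apply sig_next_pos; auto].
rewrite (cont_eq N r sd Hr Hsd (N - n) n ltac:(lia)); [|apply sig_next_pos; auto].
destruct (coefs_nonneg (N - n)) as [HA HB].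
set (A := fst (coefs (N - n))) in *. set (B := snd (coefs (N - n))) in *.
assert (HX : 0 < sqrt Sig) by (apply sqrt_lt_R0; lra).
assert (HSX : Sig = sqrt Sig ^2) by (symmetry; apply pow2_sqrt; lra).
set (X := sqrt Sig) in *.
destruct (wt_facts (A+B)) as (Hw & Ht & Htw & _); [lra|].
unfold cof. fold A B.
set (w := wof (A+B)) in *. set (t := tof (A+B)) in *.
set (q := b * X / r).
assert (HYq : 0 < sqrt (1 + q^2)) by (apply sqrt_lt_R0; nra).
assert (HYq2 : sqrt (1 + q^2) ^2 = 1 + q^2) by (apply pow2_sqrt; nra).
rewrite (comp r X q (sqrt (1+q^2)) A B b Sig sd); auto; [| unfold q; field; lra].
rewrite (comp r X (w/t) (1/t) A B (w/t*r/X) Sig sd); auto.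
2: apply Rdiv_lt_0_compat; lra.
2: { replace ((1/t)^2) with ((t^2+w^2)/t^2) by (rewrite Htw; field; lra). field; lra. }
cbn [fst snd].
rewrite (value r X q (sqrt (1+q^2)) A B Sig); auto.
rewrite (value r X (w/t) (1/t) A B Sig); auto.
2: apply Rdiv_lt_0_compat; lra.
2: { replace ((1/t)^2) with ((t^2+w^2)/t^2) by (rewrite Htw; field; lra). field; lra. }
apply Rmult_le_compat_l; [nra|].
replace (1/(1/t)) with t by (field; lra).
replace (w/t/(1/t)) with w by (field; lra).
apply core; [lra| |].
- apply Rlt_le, Rdiv_lt_0_compat; lra.
- replace ((1 / sqrt (1+q^2))^2 + (q / sqrt (1+q^2))^2) with ((1+q^2)/sqrt(1+q^2)^2) by (field; lra).
  rewrite HYq2. field. nra.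
Qed.

Lemma sig_path_pos s sd Sig0 : 0 < sd -> 0 < Sig0 -> forall n, 0 < sig_path s sd Sig0 n.
Proof. intros Hsd H0 n; induction n; simpl; auto. apply sig_next_pos; auto. Qed.

Lemma inv_sqrt1 t w : 0 < t -> t^2 + w^2 = 1 -> sqrt (1 / ((w/t)^2 + 1)) = t /\ sqrt (1 + (w/t)^2) = 1/t.
Proof.
intros Ht Htw.
assert (Hc : (w/t)^2 + 1 = (1/t)^2).
{ transitivity ((t^2+w^2)/t^2); [field; lra|]. rewrite Htw. field; lra. }
split.
- rewrite Hc. replace (1 / (1/t)^2) with (t^2) by (field; lra).
  apply sqrt_pow2; lra.
- rewrite Rplus_comm, Hc.
  apply sqrt_pow2. apply Rlt_le, Rdiv_lt_0_compat; lra.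
Qed.

Theorem theorem3 (N : nat) (sigma_u Sigma0 : R) :
  (1 <= N)%nat -> 0 < sigma_u -> 0 < Sigma0 ->
  let dt := / INR N in
  let sd := sigma_u ^ 2 * dt in
  exists s : nat -> R -> R,
    SPE N sd s /\
    exists a b c : nat -> R,
      a (N - 1)%nat = 0 /\ b (N - 1)%nat = 1 / 2 /\ c N = 1 /\
      (forall n : nat, (1 <= n <= N - 1)%nat ->
         a (n - 1)%nat = a n * sqrt (1 / (c n ^ 2 + 1))
                         + b n * (sqrt (1 / (c n ^ 2 + 1))) ^ 3 * c n ^ 2 /\
         b (n - 1)%nat = b n * (sqrt (1 / (c n ^ 2 + 1))) ^ 3
                         + c n / (c n ^ 2 + 1) /\
         a n + b n = (1 - c n ^ 2) / (c n * sqrt (1 + c n ^ 2))) /\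
      (forall n : nat, (1 <= n <= N)%nat -> 0 < c n) /\
      (forall n : nat, (n <= N - 1)%nat ->
         delta_path N s sd Sigma0 n
           = a n * sigma_u * sqrt dt * sqrt (sig_path s sd Sigma0 n) /\
         alpha_path N s sd Sigma0 n
           = b n * sigma_u * sqrt dt / sqrt (sig_path s sd Sigma0 n)) /\
      (forall n : nat, (1 <= n <= N)%nat ->
         beta_path s sd Sigma0 n
           = c n * sigma_u * sqrt dt / sqrt (sig_path s sd Sigma0 (n - 1)%nat)).
Proof.
intros HN Hsu HS0 dt sd.
assert (Hdt : 0 < dt) by (unfold dt; apply Rinv_0_lt_compat, lt_0_INR; lia).
set (r := sigma_u * sqrt dt).
assert (Hr : 0 < r) by (unfold r; apply Rmult_lt_0_compat; [lra| apply sqrt_lt_R0; lra]).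
assert (Hsd : sd = r^2) by (unfold r, sd; rewrite Rpow_mult_distr, pow2_sqrt; lra).
assert (Hsd0 : 0 < sd) by (rewrite Hsd; nra).
exists (fun n Sig => cof N n * r / sqrt Sig).
split.
{ intros n Hn Sig HSig b. apply spe_ineq; auto. }
exists (fun n => fst (coefs (N - n))), (fun n => snd (coefs (N - n))), (cof N).
assert (E1 : (N - (N - 1) = 1)%nat) by lia.
destruct (wt_facts 0) as (Hw0 & Ht0 & Htw0 & HSw0); [lra|].
assert (Hwt0 : wof 0 = tof 0) by nra.
split; [| split; [| split; [| split; [| split; [| split]]]]].
- rewrite E1. cbn [coefs]. unfold cstep. cbn [fst snd]. ring.
- rewrite E1. cbn [coefs]. unfold cstep. cbn [fst snd].
  replace (0+0) with 0 by ring. nra.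
- unfold cof. rewrite Nat.sub_diag. cbn [coefs fst snd]. replace (0+0) with 0 by ring.
  rewrite Hwt0. field. lra.
- intros n Hn. cbv beta.
  assert (Hk : (N - (n - 1) = S (N - n))%nat) by lia.
  rewrite Hk. cbn [coefs]. unfold cstep. cbn [fst snd]. unfold cof.
  destruct (coefs_nonneg (N - n)) as [HA HB].
  set (A := fst (coefs (N - n))) in *. set (B := snd (coefs (N - n))) in *.
  destruct (wt_facts (A+B)) as (Hw & Ht & Htw & HSw); [lra|].
  set (w := wof (A+B)) in *. set (t := tof (A+B)) in *.
  destruct (inv_sqrt1 t w Ht Htw) as [E2 E3]. rewrite E2, E3.
  split; [| split].
  + field. lra.
  + assert (Hc : (w/t)^2 + 1 = (1/t)^2).
    { transitivity ((t^2+w^2)/t^2); [field; lra|]. rewrite Htw. field; lra. }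
    rewrite Hc. field. lra.
  + assert (A + B = (1 - 2*w^2)/w) by (rewrite <- HSw; field; lra).
    rewrite H. replace (1 - 2*w^2) with (t^2 - w^2) by lra.
    replace (1 - (w/t)^2) with ((t^2-w^2)/t^2) by (field; lra).
    field. lra.
- intros n Hn. unfold cof.
  destruct (coefs_nonneg (N - n)) as [HA HB].
  destruct (wt_facts (fst (coefs (N - n)) + snd (coefs (N - n)))) as (Hw & Ht & _ & _); [lra|].
  apply Rdiv_lt_0_compat; lra.
- intros n Hn. unfold delta_path, alpha_path.
  rewrite (cont_eq N r sd Hr Hsd (N - n) n ltac:(lia)); [| apply sig_path_pos; auto].
  cbn [fst snd]. set (P := sqrt (sig_path _ sd Sigma0 n)). unfold r. clearbody P. generalize (fst (coefs (N - n))) (snd (coefs (N - n))). intros. unfold Rdiv. split; ring.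
- intros n Hn. unfold beta_path. unfold r, Rdiv. ring.
Qed.
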